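(* Let $\mathbf{M},\bm{\Gamma}_1,\dots,\bm{\Gamma}_L$ be nonsingular $D\times D$ integer matrices that are pairwise commutative and coprime, and let $\mathbf{M}_i=\mathbf{M}\bm{\Gamma}_i$, $1\le i\le L$. Then for every unimodular $\mathbf{U}$, $\mathbf{R}=\mathbf{M}\bm{\Gamma}_1\cdots\bm{\Gamma}_L\mathbf{U}$ is an lcrm of $\mathbf{M}_1,\dots,\mathbf{M}_L$, and with $\mathbf{N}_1=\mathbf{M}\bm{\Gamma}_1$, $\mathbf{N}_i=\bm{\Gamma}_i$ ($2\le i\le L$), $\mathbf{W}_i=\mathbf{N}_1\cdots\mathbf{N}_{i-1}\mathbf{N}_{i+1}\cdots\mathbf{N}_L$, and integer matrices $\widehat{\mathbf{W}}_i$ chosen so that $\mathbf{W}_i\widehat{\mathbf{W}}_i+\mathbf{N}_i\mathbf{Q}_i=\mathbf{I}$ for some integer $\mathbf{Q}_i$ if $\mathbf{N}_i$ is not unimodular (and $\widehat{\mathbf{W}}_i=\mathbf{0}$ otherwise), every $\mathbf{m}\in\mathcal{N}(\mathbf{R})$ satisfies $\mathbf{m}=\big\langle\sum_{i=1}^L\mathbf{W}_i\widehat{\mathbf{W}}_i\langle\mathbf{m}\rangle_{\mathbf{M}_i}\big\rangle_{\mathbf{R}}$; in particular $\mathbf{m}$ is uniquely determined by its remainders modulo $\mathbf{M}_1,\dots,\mathbf{M}_L$.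
   Context: All matrices are $D\times D$ integer matrices; unimodular means integer with determinant $\pm1$. Commuting nonsingular integer matrices are coprime if all their common left (equivalently right) divisors are unimodular, where $\mathbf{A}$ is a left divisor of $\mathbf{M}$ if $\mathbf{A}^{-1}\mathbf{M}$ is integer. An lcrm of $\mathbf{M}_1,\dots,\mathbf{M}_L$ is a nonsingular integer $\mathbf{R}=\mathbf{M}_i\mathbf{P}_i$ (integer $\mathbf{P}_i$, all $i$) such that every such common right multiple equals $\mathbf{R}\mathbf{A}$ for integer $\mathbf{A}$. $\mathcal{N}(\mathbf{M})=\{\mathbf{k}\in\mathbb{Z}^D:\mathbf{k}=\mathbf{M}\mathbf{x},\ \mathbf{x}\in[0,1)^D\}$; $\langle\mathbf{m}\rangle_{\mathbf{M}}$ is the unique $\mathbf{r}\in\mathcal{N}(\mathbf{M})$ with $\mathbf{m}-\mathbf{r}\in\mathbf{M}\mathbb{Z}^D$. *)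

(* Defs.v *)
From HB Require Import structures.
From mathcomp Require Import all_boot all_order all_algebra.
From Stdlib Require Import ClassicalEpsilon.
Set Implicit Arguments. Unset Strict Implicit. Unset Printing Implicit Defensive.
Import Order.TTheory GRing.Theory Num.Theory.
Local Open Scope ring_scope.

Section IntMx.
Variable D : nat.
Implicit Types (A B C S : 'M[int]_D) (m r v : 'cV[int]_D).

Definition nonsingular A : bool := \det A != 0.
Definition unimodular A : bool := (\det A == 1) || (\det A == -1).
Definition left_div C A : Prop := exists X : 'M[int]_D, A = C *m X.
Definition coprime_mx A B : Prop :=
  forall C, nonsingular C -> left_div C A -> left_div C B -> unimodular C.
Definition commute_mx A B : Prop := A *m B = B *m A.

Definition is_lcrm L (Ms : 'I_L -> 'M[int]_D) (R : 'M[int]_D) : Prop :=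
  nonsingular R /\ (forall i, exists P : 'M[int]_D, R = Ms i *m P) /\
  (forall S, nonsingular S -> (forall i, exists P : 'M[int]_D, S = Ms i *m P) ->
     exists A : 'M[int]_D, S = R *m A).

Definition intmx_rat {p q : nat} (A : 'M[int]_(p, q)) : 'M[rat]_(p, q) :=
  map_mx (fun z : int => z%:~R) A.

Definition in_N A (k : 'cV[int]_D) : Prop :=
  exists x : 'cV[rat]_D, (forall i, 0 <= x i 0 /\ x i 0 < 1) /\
    intmx_rat k = intmx_rat A *m x.

Definition in_lat A v : Prop := exists x : 'cV[int]_D, v = A *m x.

Definition is_rem A m r : Prop := in_N A r /\ in_lat A (m - r).

(* <m>_A, the unique such r (chosen by epsilon; unique whenever A nonsingular) *)
Definition remv A m : 'cV[int]_D := epsilon (inhabits m) (is_rem A m).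

(* N_1 = M Gamma_1, N_i = Gamma_i (i >= 2); indices shifted to 0..L-1 *)
Definition Nmx L (M : 'M[int]_D) (Gamma : 'I_L -> 'M[int]_D) (i : 'I_L) : 'M[int]_D :=
  if val i == 0%N then M *m Gamma i else Gamma i.
Definition Wmx L (M : 'M[int]_D) (Gamma : 'I_L -> 'M[int]_D) (i : 'I_L) : 'M[int]_D :=
  \big[mulmx/1%:M]_(j < L | j != i) Nmx M Gamma j.
End IntMx.

(* Main.v *)
Require Import Defs.
From HB Require Import structures.
From mathcomp Require Import all_boot all_order all_algebra.
From mathcomp Require Import ring lra zify.
From Stdlib Require Import ClassicalEpsilon.
Set Implicit Arguments. Unset Strict Implicit. Unset Printing Implicit Defensive.
Import Order.TTheory GRing.Theory Num.Theory.
Local Open Scope ring_scope.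

Lemma unitzE (x : int) : (x \is a GRing.unit) = (x == 1) || (x == -1).
Proof. by []. Qed.

Lemma unimodE n (A : 'M[int]_n) : unimodular A = (A \in unitmx).
Proof. by rewrite unitmxE unitzE. Qed.

Lemma unit_nonsing n (A : 'M[int]_n) : A \in unitmx -> nonsingular A.
Proof. rewrite unitmxE unitzE /nonsingular; by case/orP=> /eqP->. Qed.

Lemma cancel_left n c (A : 'M[int]_n) (X Y : 'M[int]_(n,c)) :
  nonsingular A -> A *m X = A *m Y -> X = Y.
Proof.
move=> hA hXY.
have : \adj A *m (A *m X) = \adj A *m (A *m Y) by rewrite hXY.
rewrite !mulmxA mul_adj_mx !mul_scalar_mx => /matrixP H.
apply/matrixP => i j; move: (H i j); rewrite !mxE; exact: mulfI.
Qed.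

Definition bez n (A C : 'M[int]_n) := exists X Y, A *m X + C *m Y = 1%:M.

Lemma bez_coprime n (A C : 'M[int]_n) : bez A C -> coprime_mx A C.
Proof.
case=> X [Y hXY] G hG [X' hA] [C'' hC].
move: hXY; rewrite hA hC -!mulmxA -mulmxDr => /(congr1 determinant).
rewrite det_mulmx det1 => h; rewrite /unimodular -unitzE.
by apply/unitrPr; exists (\det (X' *m X + C'' *m Y)).
Qed.

Lemma completion n (A B : 'M[int]_n) : nonsingular A -> coprime_mx A B ->
  exists C E : 'M[int]_n, block_mx A B C E \in unitmx.
Proof.
move=> hA hco.
have [L uL [R uR [d _ hS]]] := int_Smith_normal_form (row_mx A B).
set S := \matrix_(i, j) _ in hS.
pose Dl : 'M[int]_n := \matrix_(i, j) (d`_i *+ (i == j :> nat)).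
have hSD : S = row_mx Dl 0.
  apply/matrixP => i j; rewrite mxE; case: (splitP j) => k hk.
    have -> : j = lshift n k by apply/val_inj.
    by rewrite row_mxEl mxE.
  have -> : j = rshift n k by apply/val_inj.
  rewrite row_mxEr mxE /=.
  have -> : (i == n + k :> nat) = false.
    by apply/negbTE; rewrite neq_ltn (leq_trans (ltn_ord i)) ?leq_addr.
  by rewrite mulr0n.
set R1 := usubmx R; set R2 := dsubmx R.
have hRR : R = col_mx R1 R2 by rewrite vsubmxK.
pose G := L *m Dl.
have hAB : row_mx A B = row_mx (G *m lsubmx R1) (G *m rsubmx R1).
  rewrite -mul_mx_row hsubmxK hS hSD -mulmxA.
  have -> : row_mx Dl 0 *m R = Dl *m R1 by rewrite {1}hRR mul_row_col mul0mx addr0.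
  idtac.
  by rewrite /G mulmxA.
case: (eq_row_mx hAB) => eA eB.
have hGn : nonsingular G.
  move: hA; rewrite /nonsingular eA det_mulmx.
  by apply: contraNN => /eqP ->; rewrite mul0r.
have hGu : G \in unitmx.
  rewrite -unimodE; apply: hco => //; [exists (lsubmx R1) | exists (rsubmx R1)]; by [].
exists (lsubmx R2), (rsubmx R2).
have -> : block_mx A B (lsubmx R2) (rsubmx R2) = block_mx G 0 0 1%:M *m R.
  rewrite block_mxEv hsubmxK [X in _ *m X]hRR mul_block_col !mul0mx mul1mx addr0 add0r.
  by rewrite hAB -mul_mx_row hsubmxK.
rewrite unitmx_mul uR andbT unitmxE (det_ublock G 0 1%:M) det1 mulr1.
by rewrite -unitmxE.
Qed.

Lemma lcm_lemma n c (A B : 'M[int]_n) (P Q : 'M[int]_(n, c)) :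
  nonsingular A -> A *m B = B *m A -> coprime_mx A B ->
  A *m P = B *m Q -> exists T, P = B *m T.
Proof.
move=> hA hAB hco hPQ.
have [C [E hPhi]] := completion hA hco.
set Phi := block_mx A B C E in hPhi.
pose F := C *m B - E *m A.
have hF : Phi *m block_mx 1%:M B 0 (- A) = block_mx A 0 C F.
  rewrite /Phi mulmx_block !mulmx1 !mulmx0 !addr0 !mulmxN hAB subrr.
  by [].
have hFu : F \in unitmx.
  have := congr1 determinant hF.
  rewrite det_mulmx !det_ublock !det_lblock det1 mul1r.
  rewrite -scaleN1r detZ => h.
  have hdA : \det A != 0 by [].
  have h2 : \det F = \det Phi * (-1) ^+ n.
    apply: (mulIf hdA); rewrite [LHS]mulrC -h; ring.
  rewrite unitmxE h2 unitrM; apply/andP; split; first by rewrite -unitmxE.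
  by rewrite unitrX // unitrN1.
pose W := C *m P - E *m Q.
pose T := invmx F *m W.
exists T.
have e1 : Phi *m col_mx P (- Q) = col_mx 0 W.
  by rewrite /Phi mul_block_col !mulmxN hPQ subrr.
have e2 : Phi *m (col_mx B (- A) *m T) = col_mx 0 W.
  rewrite mulmxA /Phi mul_block_col !mulmxN hAB subrr mul_col_mx mul0mx.
  by rewrite /T mulmxA mulmxV // mul1mx.
have := cancel_left (unit_nonsing hPhi) (etrans e1 (esym e2)).
rewrite mul_col_mx => /eq_col_mx [].
by [].
Qed.

Lemma bez_mul n (A B C : 'M[int]_n) : A *m C = C *m A ->
  bez A C -> bez B C -> bez (A *m B) C.
Proof.
move=> hAC [X [Y h1]] [X' [Y' h2]].
exists (X' *m X), (A *m Y' *m X + Y).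
have h : A *m (B *m X' + C *m Y') *m X = A *m X by rewrite h2 mulmx1.
rewrite mulmxDr mulmxDl !mulmxA hAC in h.
by rewrite mulmxDr !mulmxA addrA h.
Qed.

Lemma coprime_bez n (A B : 'M[int]_n) : nonsingular A -> coprime_mx A B -> bez A B.
Proof.
move=> hA hco; have [C [E hPhi]] := completion hA hco.
have := mulmxV hPhi.
rewrite -[invmx _]submxK mulmx_block (scalar_mx_block n n 1).
case/eq_block_mx => h _ _ _.
by exists (ulsubmx (invmx (block_mx A B C E))), (dlsubmx (invmx (block_mx A B C E))).
Qed.

Lemma ir_mul p q r (A : 'M[int]_(p, q)) (B : 'M[int]_(q, r)) :
  intmx_rat (A *m B) = intmx_rat A *m intmx_rat B.
Proof. by apply/matrixP=> i j; rewrite !mxE rmorph_sum; apply: eq_bigr => k _; rewrite !mxE rmorphM. Qed.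

Lemma ir_add p q (A B : 'M[int]_(p, q)) : intmx_rat (A + B) = intmx_rat A + intmx_rat B.
Proof. by apply/matrixP=> i j; rewrite !mxE rmorphD. Qed.

Lemma ir_sub p q (A B : 'M[int]_(p, q)) : intmx_rat (A - B) = intmx_rat A - intmx_rat B.
Proof. by apply/matrixP=> i j; rewrite !mxE rmorphB. Qed.

Lemma ir_unit n (A : 'M[int]_n) : nonsingular A -> intmx_rat A \in unitmx.
Proof.
move=> hA; rewrite unitmxE /intmx_rat det_map_mx unitfE.
by rewrite intr_eq0.
Qed.

Lemma rem_exists n (A : 'M[int]_n) v : nonsingular A -> exists r, is_rem A v r.
Proof.
move=> hA.
pose y := invmx (intmx_rat A) *m intmx_rat v.
pose z : 'cV[int]_n := \col_i Num.floor (y i 0).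
exists (v - A *m z); split.
  exists (y - intmx_rat z); split.
    move=> i; rewrite mxE; set t := y i 0.
    rewrite [X in t + X]mxE [intmx_rat z i 0]mxE [z i 0]mxE -/t.
    have := floor_itv t; case/andP => h1 h2.
    move: h1 h2; rewrite intrD; set f := _%:~R; rewrite (_ : 1%:~R = 1) // => h1 h2; split; lra.
  rewrite mulmxBr ir_sub ir_mul /y mulmxA mulmxV ?ir_unit // mul1mx.
  by [].
by exists z; rewrite opprB addrC subrK.
Qed.

Lemma rem_unique n (A : 'M[int]_n) v r1 r2 :
  nonsingular A -> is_rem A v r1 -> is_rem A v r2 -> r1 = r2.
Proof.
move=> hA [[x1 [hx1 e1]] [z1 f1]] [[x2 [hx2 e2]] [z2 f2]].
have hr : r1 - r2 = A *m (z2 - z1).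
  by rewrite mulmxBr -f1 -f2 opprB [RHS]addrC addrA subrK.
have hx : x1 - x2 = intmx_rat (z2 - z1).
  have := congr1 intmx_rat hr; rewrite ir_sub ir_mul e1 e2 -mulmxBr => h.
  have := congr1 (mulmx (invmx (intmx_rat A))) h.
  by rewrite !mulmxA mulVmx ?ir_unit // !mul1mx.
have hz : z2 - z1 = 0.
  apply/matrixP => i j; rewrite (ord1 j) mxE.
  have := congr1 (fun M : 'cV[rat]_n => M i 0) hx; rewrite !mxE => h.
  have [a1 b1] := hx1 i; have [a2 b2] := hx2 i.
  have l1 : (z2 i 0 - z1 i 0)%:~R < 1 :> rat by rewrite -h; lra.
  have l2 : -1 < (z2 i 0 - z1 i 0)%:~R :> rat by rewrite -h; lra.
  rewrite (_ : 1 = 1%:~R) // ltr_int in l1; rewrite (_ : -1 = (-1)%:~R) // ltr_int in l2.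
  move: l1 l2; set w := z2 i 0 - z1 i 0; lia.
by apply/eqP; rewrite -subr_eq0 hr hz mulmx0.
Qed.

Lemma remv_spec n (A : 'M[int]_n) v : nonsingular A -> is_rem A v (remv A v).
Proof. by move=> hA; apply: epsilon_spec; apply: rem_exists. Qed.

Lemma remv_eq n (A : 'M[int]_n) v r : nonsingular A -> is_rem A v r -> remv A v = r.
Proof. by move=> hA h; apply: (rem_unique hA (remv_spec v hA) h). Qed.

Lemma prod_extract (R : pzRingType) (I : eqType) (s : seq I) (P : pred I) (f : I -> R) k :
  (forall i j, GRing.comm (f i) (f j)) -> uniq s -> k \in s -> P k ->
  \prod_(j <- s | P j) f j = f k * \prod_(j <- s | P j && (j != k)) f j.
Proof.
move=> hc; elim: s => // a s IH /= /andP[ha hu].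
rewrite in_cons => /orP[/eqP ->| ks] Pk; rewrite !big_cons.
  rewrite Pk eqxx andbF; congr (_ * _).
  rewrite -[RHS]big_filter -[LHS]big_filter.
  have -> : [seq j <- s | P j && (j != a)] = [seq j <- s | P j].
    apply: eq_in_filter => j js.
    have -> : (j != a) by apply: contraNneq ha => <-.
    by rewrite andbT.
  by [].
have hak : a != k by apply: contraNneq ha => ->.
rewrite IH // hak andbT; case: (P a) => //.
by rewrite !mulrA (hc a k).
Qed.

Lemma prod_extract_ord (R : pzRingType) L (P : pred 'I_L) (f : 'I_L -> R) k :
  (forall i j, GRing.comm (f i) (f j)) -> P k ->
  \prod_(j | P j) f j = f k * \prod_(j | P j && (j != k)) f j.
Proof.
move=> hc Pk; apply: prod_extract => //; exact: index_enum_uniq.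
Qed.

Section Iter.
Variable n : nat.
Local Notation T := 'M[int]_n.+1.

Lemma prefix_nonsing (f : nat -> T) K :
  (forall j, nonsingular (f j)) -> nonsingular (\prod_(0 <= j < K) f j).
Proof.
move=> hf; elim: K => [|K IH]; first by rewrite big_geq // /nonsingular det1 oner_eq0.
rewrite big_nat_recr //= /nonsingular -mulmxE det_mulmx mulf_neq0 //; exact: hf.
Qed.

Lemma prefix_bez (f : nat -> T) K k :
  (forall i j, f i * f j = f j * f i) ->
  (forall j, (j < k)%N -> bez (f j) (f k)) ->
  (K <= k)%N -> bez (\prod_(0 <= j < K) f j) (f k).
Proof.
move=> hc hb; elim: K => [|K IH] hK.
  by rewrite big_geq //; exists 1%:M, 0; rewrite mulmx1 mulmx0 addr0.
rewrite big_nat_recr //= -mulmxE; apply: bez_mul.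
- rewrite mulmxE; apply/commr_sym/commr_prod => j _; exact: hc.
- by apply: IH; apply: ltnW.
- exact: hb.
Qed.

Lemma lcm_iter c K (f : nat -> T) (v : 'M[int]_(n.+1, c)) :
  (forall j, nonsingular (f j)) -> (forall i j, f i * f j = f j * f i) ->
  (forall j k, (j < k)%N -> (k < K)%N -> bez (f j) (f k)) ->
  (forall k, (k < K)%N -> exists V, v = f k *m V) ->
  exists W, v = (\prod_(0 <= j < K) f j) *m W.
Proof.
move=> hn hc; elim: K => [|K IH] hb hv.
  by exists v; rewrite big_geq // mul1mx.
have [W hW] : exists W, v = (\prod_(0 <= j < K) f j) *m W.
  apply: IH => [j k jk kK|k kK]; [apply: hb => //; exact: ltnW | apply: hv; exact: ltnW].
have [V hV] := hv K (ltnSn K).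
have hPK := prefix_nonsing K hn.
have [W' hW'] : exists W', W = f K *m W'.
  apply: (lcm_lemma hPK).
  - rewrite mulmxE; apply/commr_sym/commr_prod => j _; exact: hc.
  - apply: bez_coprime; apply: prefix_bez => //.
    by move=> j jK; apply: hb.
  - by rewrite -hW; exact: hV.
by exists W'; rewrite big_nat_recr //= -mulmxE -mulmxA -hW' hW.
Qed.
End Iter.

Lemma prod_extract_full (R : pzRingType) L (f : 'I_L -> R) k :
  (forall i j, GRing.comm (f i) (f j)) ->
  \prod_j f j = f k * \prod_(j | j != k) f j.
Proof. by move=> hc; apply: (@prod_extract_ord R L xpredT f k hc). Qed.

Definition ldiv n c (A : 'M[int]_n) (v : 'M[int]_(n, c)) := exists V, v = A *m V.

Lemma ldivD n c (A : 'M[int]_n) (v w : 'M[int]_(n, c)) :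
  ldiv A v -> ldiv A w -> ldiv A (v + w).
Proof. by case=> V -> [W ->]; exists (V + W); rewrite mulmxDr. Qed.

Lemma ldivN n c (A : 'M[int]_n) (v : 'M[int]_(n, c)) : ldiv A v -> ldiv A (- v).
Proof. by case=> V ->; exists (- V); rewrite mulmxN. Qed.

Lemma ldiv0 n c (A : 'M[int]_n) : ldiv A (0 : 'M[int]_(n, c)).
Proof. by exists 0; rewrite mulmx0. Qed.

Lemma ldivM n c (A : 'M[int]_n) (V : 'M[int]_(n, c)) : ldiv A (A *m V).
Proof. by exists V. Qed.

Lemma ldiv_sum n c (A : 'M[int]_n) L (P : pred 'I_L) (F : 'I_L -> 'M[int]_(n, c)) :
  (forall i, P i -> ldiv A (F i)) -> ldiv A (\sum_(i | P i) F i).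
Proof.
move=> h; apply: (big_ind (ldiv A)) => //; [exact: ldiv0 | exact: ldivD].
Qed.

Lemma ldiv_unit n c (A : 'M[int]_n) (v : 'M[int]_(n, c)) : A \in unitmx -> ldiv A v.
Proof. by move=> hA; exists (invmx A *m v); rewrite mulmxA mulmxV // mul1mx. Qed.

Lemma main_pos (n L' : nat) (M : 'M[int]_n.+1) (Gamma : 'I_L'.+1 -> 'M[int]_n.+1)
  (hM : nonsingular M) (hG : forall i, nonsingular (Gamma i))
  (hcomMG : forall i, commute_mx M (Gamma i))
  (hcomGG : forall i j, commute_mx (Gamma i) (Gamma j))
  (hcopMG : forall i, coprime_mx M (Gamma i))
  (hcopGG : forall i j, i != j -> coprime_mx (Gamma i) (Gamma j))
  (U : 'M[int]_n.+1) (hU : unimodular U)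
  (What : 'I_L'.+1 -> 'M[int]_n.+1)
  (hWhat : forall i,
     (~~ unimodular (Nmx M Gamma i) ->
        exists Q : 'M[int]_n.+1, Wmx M Gamma i *m What i + Nmx M Gamma i *m Q = 1%:M) /\
     (unimodular (Nmx M Gamma i) -> What i = 0)) :
  let Ms := fun i => M *m Gamma i in
  let R := M *m (\big[mulmx/1%:M]_(j < L'.+1) Gamma j) *m U in
  is_lcrm Ms R /\
  (forall m : 'cV[int]_n.+1, in_N R m ->
     m = remv R (\sum_(i < L'.+1) Wmx M Gamma i *m What i *m remv (Ms i) m)) /\
  (forall m m' : 'cV[int]_n.+1, in_N R m -> in_N R m' ->
     (forall i, remv (Ms i) m = remv (Ms i) m') -> m = m').
Proof.
move=> Ms R.
set L := L'.+1.
pose N := Nmx M Gamma.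
pose Pg : 'M[int]_n.+1 := \prod_(j < L) Gamma j.
have eR : R = M *m Pg *m U by [].
have hUu : U \in unitmx by rewrite -unimodE.
have hcG : forall i j, GRing.comm (Gamma i) (Gamma j) by move=> i j; exact: hcomGG.
have hcMG : forall i, GRing.comm M (Gamma i) by move=> i; exact: hcomMG.
have hcMN : forall i, GRing.comm M (N i).
  move=> i; rewrite /N /Nmx; case: ifP => _ //; rewrite mulmxE.
  by apply: commrM => //; exact: commrr.
have hcGN : forall i j, GRing.comm (Gamma i) (N j).
  move=> i j; rewrite /N /Nmx; case: ifP => _ //; rewrite mulmxE.
  by apply: commrM => //; exact/commr_sym.
have hcN : forall i j, GRing.comm (N i) (N j).
  move=> i j; rewrite {1}/N /Nmx; case: ifP => _ //; rewrite mulmxE.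
  by apply/commr_sym/commrM; apply/commr_sym.
pose g (j : nat) := Gamma (inord j).
have hPg : Pg = \prod_(0 <= j < L) g j.
  by rewrite big_mkord; apply: eq_bigr => j _; rewrite /g inord_val.
have hPgn : nonsingular Pg by rewrite hPg; apply: prefix_nonsing => j; exact: hG.
have hRn : nonsingular R.
  rewrite eR /nonsingular !det_mulmx !mulf_neq0 //.
  by move: hUu; apply: contraTN => /eqP h; rewrite unitmxE h.
have hPgi : forall i, Pg = Gamma i *m \prod_(j | j != i) Gamma j.
  by move=> i; rewrite /Pg (prod_extract_full i hcG).
have hprodN : \prod_(j < L) N j = M *m Pg.
  rewrite (prod_extract_full ord0 hcN) (hPgi ord0) /N /Nmx eqxx /=.
  rewrite -!mulmxE mulmxA; congr (_ *m _).
  apply: eq_bigr => j hj; have -> : (val j == 0%N) = false.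
    by apply/negbTE; apply: contra hj => /eqP h; apply/eqP/val_inj.
  by [].
have hgbez : forall j k, (j < k)%N -> (k < L)%N -> bez (g j) (g k).
  move=> j k jk kL; apply: coprime_bez; first exact: hG.
  apply: hcopGG; apply/negP => /eqP /(congr1 val).
  rewrite /= !inordK //; last exact: ltn_trans jk kL.
  by move=> e; move: jk; rewrite e ltnn.
have P1 : is_lcrm Ms R.
  split; first exact: hRn.
  split.
    move=> i; exists ((\prod_(j | j != i) Gamma j) *m U).
    by rewrite eR (hPgi i) /Ms !mulmxA.
  move=> S hS hSi.
  have [P0 hP0] := hSi ord0.
  pose S' := Gamma ord0 *m P0.
  have hS' : forall k, exists V, S' = Gamma k *m V.
    move=> k; have [Pk hPk] := hSi k; exists Pk.
    by apply: (cancel_left hM); rewrite /S' !mulmxA -hPk hP0.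
  have [W hW] : exists W, S' = (\prod_(0 <= j < L) g j) *m W.
    apply: (@lcm_iter n n.+1 L g S') => //.
    - by move=> j; exact: hG.
    - by move=> i j; exact: hcG.
    - by move=> k0 kL; exact: hS'.
  exists (invmx U *m W).
  rewrite -hPg in hW; rewrite hP0 -mulmxA -/S' hW eR.
  by rewrite !mulmxA -[M *m Pg *m U *m invmx U]mulmxA mulmxV // mulmx1.
have hinord : forall j k, j != k -> (j < L)%N -> (k < L)%N -> inord j != inord k :> 'I_L.
  move=> j k jk jL kL; apply: contra jk => /eqP /(congr1 val).
  by rewrite /= !inordK // => ->.
have hNn : forall j, nonsingular (N j).
  move=> j; rewrite /N /Nmx; case: ifP => _; last exact: hG.
  rewrite /nonsingular det_mulmx mulf_neq0 //; exact: hG.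
have hMsn : forall i, nonsingular (Ms i).
  move=> i; rewrite /Ms /nonsingular det_mulmx mulf_neq0 //; exact: hG.
pose h (j : nat) := N (inord j).
have hprodNnat : \prod_(0 <= j < L) h j = M *m Pg.
  by rewrite big_mkord -hprodN; apply: eq_bigr => j _; rewrite /h inord_val.
have hhbez : forall j k, (j < k)%N -> (k < L)%N -> bez (h j) (h k).
  move=> j k jk kL.
  have jL : (j < L)%N by exact: ltn_trans jk kL.
  have hk : h k = Gamma (inord k).
    rewrite /h /N /Nmx /= inordK //; case: k jk kL => //.
  have hjk : inord j != inord k :> 'I_L.
    by apply: hinord => //; rewrite neq_ltn jk.
  rewrite hk; case: (posnP j) => [j0 | jpos].
    have -> : h j = M *m Gamma (inord j) by rewrite /h /N /Nmx /= inordK // j0.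
    apply: bez_mul; first exact: hcomMG.
      by apply: coprime_bez => //; exact: hcopMG.
    by apply: coprime_bez; [exact: hG | exact: hcopGG].
  have -> : h j = Gamma (inord j).
    by rewrite /h /N /Nmx /= inordK //; case: j jpos {jk jL hjk}.
  by apply: coprime_bez; [exact: hG | exact: hcopGG].
have P2 : forall m : 'cV[int]_n.+1, in_N R m ->
     m = remv R (\sum_(i < L) Wmx M Gamma i *m What i *m remv (Ms i) m).
  move=> m hm.
  set x := \sum_(i < L) _.
  apply/esym/remv_eq => //; split => //.
  have [W hW] : exists W, x - m = (\prod_(0 <= j < L) h j) *m W.
    apply: (@lcm_iter n 1 L h (x - m)) => //.
    - by move=> j; exact: hNn.
    - by move=> i j; exact: hcN.
    move=> k kL; set kk : 'I_L := inord k.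
    have -> : h k = N kk by [].
    rewrite /x (bigD1 kk) //= addrAC.
    apply: ldivD; last first.
      apply: ldiv_sum => i hik.
      have eW : Wmx M Gamma i = \prod_(j | j != i) N j by [].
      rewrite eW (@prod_extract_ord _ L (fun j => j != i) N kk hcN); last by rewrite eq_sym.
      by rewrite -mulmxE -!mulmxA; apply: ldivM.
    set r := remv (Ms kk) m.
    have [_ [z hz]] := remv_spec m (hMsn kk).
    have hrm : ldiv (N kk) (r - m).
      rewrite -opprB hz; apply: ldivN.
      rewrite /N /Nmx /Ms; case: ifP => _; first exact: ldivM.
      by rewrite (hcomMG kk) -mulmxA; apply: ldivM.
    case: (boolP (unimodular (N kk))) => hu.
      by apply: ldiv_unit; rewrite -unimodE.
    have [Q hQ] := (hWhat kk).1 hu.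
    have -> : Wmx M Gamma kk *m What kk = 1%:M - N kk *m Q by rewrite -hQ addrK.
    rewrite mulmxBl mul1mx addrAC; apply: ldivD => //.
    by apply: ldivN; rewrite -mulmxA; apply: ldivM.
  exists (invmx U *m W).
  rewrite hW hprodNnat eR.
  by rewrite !mulmxA -[M *m Pg *m U *m invmx U]mulmxA mulmxV // mulmx1.
split; first exact: P1.
split; first exact: P2.
move=> m m' hm hm' hr.
rewrite (P2 m hm) (P2 m' hm'); congr remv; apply: eq_bigr => i _.
by rewrite hr.
Qed.

Unset Implicit Arguments.


Theorem corollary2 (D L : nat) (M : 'M[int]_D) (Gamma : 'I_L -> 'M[int]_D)
  (hL : (0 < L)%N)
  (hM : nonsingular M) (hG : forall i, nonsingular (Gamma i))
  (hcomMG : forall i, commute_mx M (Gamma i))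
  (hcomGG : forall i j, commute_mx (Gamma i) (Gamma j))
  (hcopMG : forall i, coprime_mx M (Gamma i))
  (hcopGG : forall i j, i != j -> coprime_mx (Gamma i) (Gamma j))
  (U : 'M[int]_D) (hU : unimodular U)
  (What : 'I_L -> 'M[int]_D)
  (hWhat : forall i,
     (~~ unimodular (Nmx M Gamma i) ->
        exists Q : 'M[int]_D, Wmx M Gamma i *m What i + Nmx M Gamma i *m Q = 1%:M) /\
     (unimodular (Nmx M Gamma i) -> What i = 0)) :
  let Ms := fun i => M *m Gamma i in
  let R := M *m (\big[mulmx/1%:M]_(j < L) Gamma j) *m U in
  is_lcrm Ms R /\
  (forall m : 'cV[int]_D, in_N R m ->
     m = remv R (\sum_(i < L) Wmx M Gamma i *m What i *m remv (Ms i) m)) /\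
  (forall m m' : 'cV[int]_D, in_N R m -> in_N R m' ->
     (forall i, remv (Ms i) m = remv (Ms i) m') -> m = m').
Proof.
destruct L as [|L']; first by [].
destruct D as [|n]; last exact: main_pos.
move=> Ms R; split.
  split; first by rewrite /nonsingular det_mx00 oner_eq0.
  split; first by move=> i; exists 0; rewrite !(flatmx0 R) !(flatmx0 (Ms i *m 0)).
  by move=> S _ _; exists 0; rewrite (flatmx0 S) (flatmx0 (R *m 0)).
split; first by move=> m _; rewrite (flatmx0 m) (flatmx0 (remv _ _)).
by move=> m m' _ _ _; rewrite (flatmx0 m) (flatmx0 m').
Qed.
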